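(* There is an absolute constant $C$ and a deterministic adaptive procedure with the following property. Let $G=(V,E)$ be a connected graph on $n\ge 2$ vertices with maximum degree $\Delta\ge 2$, $s\in V$, $\mathcal{T}$ the layering tree of $G$ with respect to $s$, and $\ell\ge \ell(\mathcal{T})$ an integer. Let $k\ge 0$ and $i=k+\ell+2$. Given $\ell$, the layers $L_0,L_1,\dots$, the graph $G_i$ and the tree $\mathcal{T}_k$, and access to the shortest-path distance oracle of $G$, the procedure computes $G_{i+1}$ using at most $C\cdot|L_i|\left(\Delta^{\ell+2}\log n+\Delta^{4\ell+8}\right)$ queries.
   Context: Shortest-path distance oracle: given $u,v\in V$ it returns $d_G(u,v)$; each call is one query, chosen adaptively. For a connected graph $G$ and root $s\in V(G)$, the BFS layers are $L_i=\{v: d_G(s,v)=i\}$ for $i\ge 0$, with $L_{\le k}=L_0\cup\dots\cup L_k$, $L_{\ge k}=\bigcup_{j\ge k}L_j$, $L_{-1}=\emptyset$. For each $i\ge 0$, let $S_i^1,\dots,S_i^{s_i}$ be the connected components of $G\setminus L_{\le i-1}$ (i.e. of $G[L_{\ge i}]$), and let $P_i^j=S_i^j\cap L_i$; the nonempty sets $P_i^j$ are the parts at layer (depth) $i$, and the set $\mathcal{P}$ of all parts over all layers partitions $V(G)$. The layering tree $\mathcal{T}=(\mathcal{P},\mathcal{E})$ has the parts as vertices, with $(P,P')\in\mathcal{E}$ iff some $u\in P$, $u'\in P'$ are adjacent in $G$. Its length is $\ell(\mathcal{T})=\max_{P\in\mathcal{P}}\max_{u,v\in P} d_G(u,v)$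 (distances measured in $G$). $G_i=G[L_{\le i-1}]$ is the subgraph induced by the first $i$ layers, and $\mathcal{T}_k$ is the subtree of $\mathcal{T}$ induced by the parts at layers $0,1,\dots,k-1$. *)

(* Defs.v *)
From Stdlib Require Import Reals.
From mathcomp Require Import all_boot.
Set Implicit Arguments. Unset Strict Implicit. Unset Printing Implicit Defensive.

Section Graphs.
Variable V : finType.
Variable e : rel V.

Definition simple_graph := symmetric e /\ irreflexive e.
Definition connected_graph := forall u v : V, connect e u v.

Fixpoint ball (u : V) (k : nat) : {set V} :=
  match k with
  | 0 => [set u]
  | k'.+1 => ball u k' :|: [set y | [exists x in ball u k', e x y]]
  end.

(* shortest-path distance d_G(u,v) (correct whenever v is reachable from u,
   in particular in a connected graph, where d_G(u,v) < #|V|) *)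
Definition gdist (u v : V) : nat := find (fun k => v \in ball u k) (iota 0 #|V|).

Definition maxdeg : nat := \max_(v : V) #|[set u | e v u]|.

Variable s : V.

Definition layer (i : nat) : {set V} := [set v | gdist s v == i].
Definition layer_le (i : nat) : {set V} := [set v | gdist s v <= i].
Definition layer_lt (i : nat) : {set V} := [set v | gdist s v < i].
Definition layer_ge (i : nat) : {set V} := [set v | i <= gdist s v].

Definition adj_ge (i : nat) : rel V :=
  fun x y => [&& e x y, x \in layer_ge i & y \in layer_ge i].

Definition comps (i : nat) : {set {set V}} :=
  [set [set y | connect (adj_ge i) x y] | x in layer_ge i].

Definition parts (i : nat) : {set {set V}} :=
  [set S :&: layer i | S in comps i] :\ set0.

Definition tree_edge (P Q : {set V}) : bool :=
  [exists u in P, exists v in Q, e u v].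

Definition Tk_parts (k : nat) : {set {set V}} := \bigcup_(i < k) parts i.
Definition Tk_edge (k : nat) : rel {set V} :=
  fun P Q => [&& P \in Tk_parts k, Q \in Tk_parts k & tree_edge P Q].

(* G_i = G[L_{<= i-1}] (as an adjacency relation on V, vertex set layer_lt i) *)
Definition G_ind (i : nat) : rel V :=
  fun x y => [&& e x y, x \in layer_lt i & y \in layer_lt i].

Definition tree_length_le (l : nat) : Prop :=
  forall (i : nat) (P : {set V}) (u v : V),
    P \in parts i -> u \in P -> v \in P -> gdist u v <= l.
End Graphs.

(* Deterministic adaptive query procedures (decision trees) over the oracle
   V -> V -> nat, returning a value of type A. *)
Inductive QAlg (V A : Type) : Type :=
  | Ret : A -> QAlg V A
  | Ask : V -> V -> (nat -> QAlg V A) -> QAlg V A.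
Arguments Ret {V A}.
Arguments Ask {V A}.

Fixpoint run (V A : Type) (o : V -> V -> nat) (t : QAlg V A) : A * nat :=
  match t with
  | Ret a => (a, 0)
  | Ask u v f => let r := run o (f (o u v)) in (r.1, r.2.+1)
  end.

Record Input (n : nat) := mkInput {
  in_ell : nat;
  in_k : nat;
  in_layers : nat -> {set 'I_n};
  in_Gi : rel 'I_n;
  in_Tparts : {set {set 'I_n}};
  in_Tedge : rel {set 'I_n}
}.

Definition Procedure := forall n : nat, Input n -> QAlg 'I_n (rel 'I_n).

Definition query_bound (C : R) (n Li D l : nat) : R :=
  Rmult (Rmult C (INR Li))
        (Rplus (Rmult (INR (D ^ (l + 2))) (ln (INR n))) (INR (D ^ (4 * l + 8)))).

(* Main.v *)
Require Import Defs.
From Stdlib Require Import Reals Lra.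
From mathcomp Require Import all_boot zify.

Module A.
Set Implicit Arguments. Unset Strict Implicit. Unset Printing Implicit Defensive.

Fixpoint bindQ (V A B : Type) (m : QAlg V A) (f : A -> QAlg V B) : QAlg V B :=
  match m with
  | Ret a => f a
  | Ask u v g => Ask u v (fun r => bindQ (g r) f)
  end.

Lemma run_bind (V A B : Type) (o : V -> V -> nat) (m : QAlg V A) (f : A -> QAlg V B) :
  run o (bindQ m f) = ((run o (f (run o m).1)).1, (run o m).2 + (run o (f (run o m).1)).2).
Proof.
elim: m => [a|u v g IH] /=; first by case: (run o (f a)).
by rewrite IH.
Qed.

Fixpoint askList (V : Type) (ps : seq (V * V)) : QAlg V (seq ((V * V) * nat)) :=
  match ps with
  | [::] => Ret [::]
  | p :: ps' => Ask p.1 p.2 (fun a => bindQ (askList ps') (fun rs => Ret ((p, a) :: rs)))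
  end.

Lemma run_askList (V : Type) (o : V -> V -> nat) ps :
  run o (askList ps) = ([seq (p, o p.1 p.2) | p <- ps], size ps).
Proof.
elim: ps => [|p ps IH] //=; rewrite run_bind IH /=; by rewrite addn0.
Qed.

Fixpoint mapQ (V X Y : Type) (f : X -> QAlg V Y) (xs : seq X) : QAlg V (seq Y) :=
  match xs with
  | [::] => Ret [::]
  | x :: xs' => bindQ (f x) (fun y => bindQ (mapQ f xs') (fun ys => Ret (y :: ys)))
  end.

Lemma run_mapQ (V X Y : Type) (o : V -> V -> nat) (f : X -> QAlg V Y) xs :
  run o (mapQ f xs) = ([seq (run o (f x)).1 | x <- xs], sumn [seq (run o (f x)).2 | x <- xs]).
Proof.
elim: xs => [|x xs IH] //=; rewrite !run_bind /= IH /=; by rewrite !addn0.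
Qed.

End A.
Import A.

Module B.
Set Implicit Arguments. Unset Strict Implicit. Unset Printing Implicit Defensive.

Section Dist.
Variable V : finType.
Variable e : rel V.
Hypothesis Hsym : symmetric e.
Hypothesis Hirr : irreflexive e.
Hypothesis Hcon : connected_graph e.

Definition nbr (A : {set V}) : {set V} := [set y | [exists x in A, e x y]].

Lemma ballS u k : ball e u k.+1 = ball e u k :|: nbr (ball e u k).
Proof. by []. Qed.

Lemma nbrS (A B : {set V}) : A \subset B -> nbr A \subset nbr B.
Proof.
move=> sAB; apply/subsetP=> y; rewrite !inE => /existsP [x /andP [xA exy]].
by apply/existsP; exists x; rewrite (subsetP sAB).
Qed.

Lemma ball_mono u k k' : k <= k' -> ball e u k \subset ball e u k'.
Proof.
move=> /subnK <-; elim: (k' - k) => [|d IH] //=.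
apply: subset_trans IH _; exact: subsetUl.
Qed.

Lemma ball_center u k : u \in ball e u k.
Proof. by apply: (subsetP (ball_mono u (leq0n k))); rewrite /= inE. Qed.

Lemma ball_trans a b r1 r2 : b \in ball e a r1 -> ball e b r2 \subset ball e a (r1 + r2).
Proof.
move=> bin; elim: r2 => [|r2 IH].
  by apply/subsetP=> y; rewrite /= inE => /eqP ->; rewrite addn0.
rewrite addnS !ballS; apply: setUSS => //; exact: nbrS.
Qed.

Lemma ball_sym u v k : v \in ball e u k -> u \in ball e v k.
Proof.
elim: k v => [|k IH] v; first by rewrite /= !inE => /eqP ->.
rewrite ballS in_setU => /orP [vin|]; first by apply: (subsetP (ball_mono v (leqnSn k))); exact: IH.
rewrite inE => /existsP [x /andP [xin exv]].
have xv : x \in ball e v 1 by rewrite ballS in_setU; apply/orP; right; rewrite inE; apply/existsP; exists v; rewrite /= inE eqxx Hsym.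
have := ball_trans k xv; rewrite add1n => /subsetP; apply; exact: IH.
Qed.

Lemma path_ball u p : path e u p -> last u p \in ball e u (size p).
Proof.
elim/last_ind: p => [|p x IH]; first by rewrite /= inE.
rewrite rcons_path last_rcons size_rcons => /andP [pp ex].
rewrite ballS in_setU; apply/orP; right; rewrite inE; apply/existsP; exists (last u p).
by rewrite IH.
Qed.

Lemma reach u v : v \in ball e u #|V|.-1.
Proof.
have /connectP [p pp ->] := Hcon u v.
case: (shortenP pp) => p' pp' up' _.
apply: (subsetP (ball_mono u _)) (path_ball pp').
have := max_card (mem (u :: p')); rewrite (card_uniqP up') /=.
by case: #|V|.
Qed.

Local Notation dist := (gdist e).

Lemma dist_le u v k : (dist u v <= k) = (v \in ball e u k).
Proof.
set P := fun j => v \in ball e u j.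
have N0 : 0 < #|V| by apply/card_gt0P; exists u.
have hP : has P (iota 0 #|V|).
  apply/hasP; exists #|V|.-1; last exact: reach.
  by rewrite mem_iota add0n prednK // leqnn.
have dlt : dist u v < #|V| by have := has_find P (iota 0 #|V|); rewrite hP size_iota => /esym/idP.
have Pd : P (dist u v).
  by have := nth_find 0 hP; rewrite nth_iota // add0n.
apply/idP/idP => [dk|Pk].
  exact: (subsetP (ball_mono u dk)).
rewrite leqNgt; apply/negP => kd.
have := before_find 0 kd; rewrite nth_iota ?add0n; last exact: ltn_trans kd dlt.
by rewrite /P Pk.
Qed.

Lemma dist_lt u v : dist u v < #|V|.
Proof.
have N0 : 0 < #|V| by apply/card_gt0P; exists u.
have := reach u v; rewrite -dist_le => H; apply: leq_ltn_trans H _.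
by rewrite prednK.
Qed.

Lemma dist_tri a b c : dist a c <= dist a b + dist b c.
Proof.
rewrite dist_le; apply: (subsetP (ball_trans _ _)); last by rewrite -dist_le.
by rewrite -dist_le.
Qed.

Lemma dist_sym u v : dist u v = dist v u.
Proof.
by apply/eqP; rewrite eqn_leq !dist_le; apply/andP; split; apply: ball_sym; rewrite -dist_le.
Qed.

Lemma dist0 u v : (dist u v == 0) = (u == v).
Proof.
by rewrite -leqn0 dist_le /= inE eq_sym.
Qed.

Lemma dist_uu u : dist u u = 0.
Proof. by apply/eqP; rewrite dist0. Qed.

Lemma dist_edge u v : e u v -> dist u v <= 1.
Proof.
move=> euv; rewrite dist_le ballS in_setU; apply/orP; right.
by rewrite inE; apply/existsP; exists u; rewrite /= inE eqxx.
Qed.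

Lemma dist1 u v : (dist u v == 1) = e u v.
Proof.
apply/idP/idP => [/eqP d1|euv].
  have : v \in ball e u 1 by rewrite -dist_le d1.
  rewrite ballS in_setU /= inE => /orP [/eqP vu|].
    by move: d1; rewrite vu dist_uu.
  by rewrite inE => /existsP [x]; rewrite inE => /andP [/eqP ->].
rewrite eqn_leq dist_edge //= lt0n dist0; apply/eqP => uv.
by move: euv; rewrite uv Hirr.
Qed.

Lemma dist_step u v d : dist u v = d.+1 -> exists x, dist u x = d /\ e x v.
Proof.
move=> duv.
have : v \in ball e u d.+1 by rewrite -dist_le duv.
rewrite ballS in_setU -dist_le duv ltnn /= inE => /existsP [x /andP [xin exv]].
exists x; split => //.
apply/eqP; rewrite eqn_leq dist_le xin /=.
have := dist_tri u x v; rewrite duv => H.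
have := dist_edge exv => H2.
by rewrite -ltnS; apply: leq_trans H _; rewrite -addn1 leq_add2l.
Qed.

Lemma card_nbr (A : {set V}) : #|nbr A| <= maxdeg e * #|A|.
Proof.
have -> : nbr A = [set y | has (fun x => e x y) (enum A)].
  apply/setP=> y; rewrite !inE; apply/existsP/hasP => [[x /andP [xA exy]]|[x xA exy]];
  by exists x; rewrite ?mem_enum in xA * => //; rewrite xA.
rewrite [#|A|]cardE; elim: (enum A) => [|x s IH].
  rewrite /= muln0 leqn0 cards_eq0; apply/eqP/setP=> y; by rewrite !inE.
have -> : [set y | has (fun x0 => e x0 y) (x :: s)] = [set y | e x y] :|: [set y | has (fun x0 => e x0 y) s].
  by apply/setP=> y; rewrite !inE.
rewrite /= mulnS; apply: leq_trans (leq_card_setU _ _).1 _.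
apply: leq_add => //.
rewrite /maxdeg; exact: (@leq_bigmax _ (fun v => #|[set u | e v u]|) x).
Qed.

Lemma ball_sub1 u r : ball e u r.+1 \subset u |: nbr (ball e u r).
Proof.
elim: r => [|r IH]; first by rewrite ballS.
rewrite ballS; apply/subUsetP; split.
  apply: subset_trans IH _; apply: setUS; apply: nbrS; exact: ball_mono.
exact: subsetUr.
Qed.

Lemma card_ball u r : 2 <= maxdeg e -> #|ball e u r| < (maxdeg e) ^ r.+1.
Proof.
move=> D2; set D := maxdeg e.
have key : (D.-1) * #|ball e u r| + 1 <= D ^ r.+1.
  elim: r => [|r IH].
    by rewrite /= cards1 muln1 expn1 addn1 prednK // ltnW.
  have h1 : #|ball e u r.+1| <= 1 + D * #|ball e u r|.
    apply: leq_trans (subset_leq_card (ball_sub1 u r)) _.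
    apply: leq_trans (leq_card_setU _ _).1 _; rewrite cards1 leq_add2l.
    exact: card_nbr.
  rewrite expnS; apply: leq_trans (_ : D * (D.-1 * #|ball e u r| + 1) <= _); last by rewrite leq_mul2l IH orbT.
  apply: leq_trans (_ : D.-1 * (1 + D * #|ball e u r|) + 1 <= _).
    by rewrite leq_add2r leq_mul2l h1 orbT.
  rewrite mulnDr muln1 mulnDr muln1 mulnA [D.-1 * D]mulnC -mulnA.
  move: (D * _) D2 => X; rewrite -/D; lia.
apply: leq_trans key; rewrite addn1 ltnS.
by rewrite leq_pmull // -ltnS prednK // ltnW.
Qed.


Variable s : V.
Local Notation ds := (gdist e s).

Lemma ds_edge x y : e x y -> ds y <= (ds x).+1.
Proof. by move=> exy; apply: leq_trans (dist_tri s x y) _; rewrite -addn1 leq_add2l dist_edge. Qed.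

Lemma anc_exists u j : j <= ds u -> exists a, ds a = j /\ dist a u + j = ds u.
Proof.
move=> hj; have : ds u = (ds u - j) + j by rewrite subnK.
move: (ds u - j) => d; clear hj; elim: d u => [|d IH] u hu.
  by exists u; rewrite dist_uu hu.
rewrite addSn in hu.
have [x [dx exu]] := dist_step hu.
have [a [da dax]] := IH x dx.
exists a; split => //.
apply/eqP; rewrite eqn_leq; apply/andP; split.
  apply: leq_trans (_ : dist a x + dist x u + j <= _); first by rewrite leq_add2r dist_tri.
  by rewrite addnAC dax dx hu -addn1 leq_add2l dist_edge.
by rewrite -da addnC dist_tri.
Qed.

Lemma anc_trans a b c : dist a b + ds a = ds b -> dist b c + ds b = ds c -> dist a c + ds a = ds c.
Proof.
move=> h1 h2; apply/eqP; rewrite eqn_leq; apply/andP; split.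
  by rewrite -h2 -h1 addnA leq_add2r addnC; exact: dist_tri.
by rewrite addnC dist_tri.
Qed.

Lemma adj_ge_sym j : connect_sym (adj_ge e s j).
Proof.
apply: sym_connect_sym => x y; rewrite /adj_ge Hsym.
by case: (e y x); rewrite //= andbC.
Qed.

Lemma adj_ge_mono j j' x y : j <= j' -> connect (adj_ge e s j') x y -> connect (adj_ge e s j) x y.
Proof.
move=> jj; apply: connect_sub => a b /and3P [eab ha hb]; apply: connect1.
rewrite !inE in ha hb; by rewrite /adj_ge eab !inE (leq_trans jj ha) (leq_trans jj hb).
Qed.

Lemma adj_ge0 x y : connect (adj_ge e s 0) x y.
Proof.
rewrite (@eq_connect _ _ e) //; move=> a b; by rewrite /adj_ge !inE !leq0n !andbT.
Qed.

Lemma anc_connect a u : dist a u + ds a = ds u -> connect (adj_ge e s (ds a)) a u.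
Proof.
move=> h; move: {2}(dist a u) (erefl (dist a u)) h => d.
elim: d u => [|d IH] u.
  by move/eqP; rewrite dist0 => /eqP -> _; exact: connect0.
move=> hd h.
have [x [dx exu]] := dist_step hd.
have hx : dist a x + ds a = ds x.
  apply/eqP; rewrite eqn_leq; apply/andP; split; last by rewrite addnC dist_tri.
  have := ds_edge exu; rewrite -h; lia.
apply: connect_trans (IH x dx hx) (connect1 _).
rewrite /adj_ge exu !inE -hx -h leq_addl /=.
exact: leq_addl.
Qed.
End Dist.

End B.
Import B.

Module C.
Set Implicit Arguments. Unset Strict Implicit. Unset Printing Implicit Defensive.

Section Alg.
Variable V : finType.
Variables (L : nat -> {set V}) (l k : nat) (Gi : rel V) (TP : {set {set V}}).

Definition ii := k + l + 2.
Definition lay (y : V) := find (fun j => y \in L j) (iota 0 #|V|).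
Fixpoint LB (a : V) (r : nat) : {set V} :=
  match r with
  | 0 => [set a]
  | r'.+1 => LB a r' :|: [set y | [exists z in LB a r', Gi z y && (lay y == (lay z).+1)]]
  end.
Definition PQ q := [set y | [exists P in TP, (q \in P) && (y \in P)]].
Definition Cset q := [set u | [exists x in PQ q, u \in LB x #|V|]].
Definition elig (Cand : {set V}) q := (lay q < k) && (#|Cand| < 2 * #|Cand :&: Cset q|).
Definition best Cand q := elig Cand q && [forall q', elig Cand q' ==> (lay q' <= lay q)].
Definition Yset q := if (lay q).+1 == k then PQ q
  else [set y | (lay y == (lay q).+1) && [exists x in PQ q, Gi x y]].

Fixpoint search (v : V) (fuel : nat) (Cand : {set V}) : QAlg V {set V} :=
  match fuel with
  | 0 => Ret Cand
  | f.+1 =>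
    match [pick q | best Cand q] with
    | None => Ret Cand
    | Some q => bindQ (askList [seq (y, v) | y <- enum (Yset q)]) (fun res =>
        match [seq p.1.1 | p <- res & p.2 + lay p.1.1 == ii] with
        | y :: _ => if (lay y).+1 == k then Ret (Cand :&: Cset y)
                    else search v f (Cand :&: Cset y)
        | [::] => search v f (Cand :\: Cset q)
        end)
    end
  end.

Definition cfOf (Vi : seq V) (cs : seq {set V}) (v : V) := nth set0 cs (index v Vi).
Definition pairsOf (Vi : seq V) (cf : V -> {set V}) :=
  flatten [seq [seq (u, v) | u <- enum (cf v :|: [set w in L ii | cf w == cf v])] | v <- Vi].

Definition alg : QAlg V (rel V) :=
  bindQ (mapQ (fun v => search v #|V|.+1 (L ii.-1)) (enum (L ii))) (fun cs =>
    bindQ (askList (pairsOf (enum (L ii)) (cfOf (enum (L ii)) cs))) (fun ans =>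
      let E1 := [seq p.1 | p <- ans & p.2 == 1] in
      Ret (fun x y => Gi x y || ((x, y) \in E1) || ((y, x) \in E1)))).
End Alg.

End C.
Import C.

Module D.
Set Implicit Arguments. Unset Strict Implicit. Unset Printing Implicit Defensive.

Section Proofs.
Variable V : finType.
Variable e : rel V.
Hypothesis Hsym : symmetric e.
Hypothesis Hirr : irreflexive e.
Hypothesis Hcon : connected_graph e.
Variable s : V.
Variables l k : nat.
Hypothesis Htl : tree_length_le e s l.
Hypothesis D2 : 2 <= maxdeg e.

Local Notation dist := (gdist e).
Local Notation ds := (gdist e s).
Local Notation i := (ii l k).
Local Notation L := (layer e s).
Local Notation Gi := (G_ind e s i).
Local Notation TP := (Tk_parts e s k).
Local Notation lay := (lay L).
Local Notation LB := (LB L Gi).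
Local Notation PQ := (PQ TP).
Local Notation Cset := (Cset L Gi TP).

Lemma lay_ds y : lay y = ds y.
Proof.
rewrite /C.lay (@eq_find _ _ (pred1 (ds y))); last by move=> j; rewrite /= inE eq_sym.
have := dist_lt Hcon s y; move: (ds y) => d hd.
rewrite (_ : find (pred1 d) _ = index d (iota 0 #|V|)) //.
have hs : d < size (iota 0 #|V|) by rewrite size_iota.
by have := index_uniq 0 hs (iota_uniq 0 #|V|); rewrite nth_iota // add0n.
Qed.

Lemma LB_mono a r r' : r <= r' -> LB a r \subset LB a r'.
Proof.
move=> /subnK <-; elim: (r' - r) => [|d IH] //=.
by apply: subset_trans IH _; exact: subsetUl.
Qed.

Lemma LB_anc a u r : u \in LB a r -> dist a u + ds a = ds u.
Proof.
elim: r u => [|r IH] u /=; first by rewrite inE => /eqP ->; rewrite (dist_uu Hcon).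
rewrite in_setU => /orP [/IH //|]; rewrite inE => /existsP [z /andP [zin /andP [gz]]].
rewrite !lay_ds => /eqP hu; move/IH: zin => hz.
case/and3P: gz => ezu _ _.
have h1 := dist_tri Hcon a z u.
have h2 := dist_edge Hcon ezu.
have h3 := dist_tri Hcon s a u.
lia.
Qed.

Lemma anc_LB a u : dist a u + ds a = ds u -> ds u < i -> u \in LB a #|V|.
Proof.
move=> h hi; apply: (subsetP (LB_mono a (ltnW (dist_lt Hcon a u)))).
suff : forall d u, dist a u = d -> dist a u + ds a = ds u -> ds u < i -> u \in LB a d.
  by move=> H; apply: H.
clear u h hi; elim=> [|d IH] u.
  by move/eqP; rewrite (dist0 Hcon) => /eqP -> _ _; rewrite /= inE.
move=> hd h hi.
have [x [dx exu]] := dist_step Hcon hd.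
have hx : dist a x + ds a = ds x.
  apply/eqP; rewrite eqn_leq; apply/andP; split; last by rewrite addnC (dist_tri Hcon).
  have := ds_edge Hcon s exu; lia.
have hxu : ds u = (ds x).+1.
  have := ds_edge Hcon s exu; have := dist_tri Hcon s a x; lia.
rewrite /= in_setU; apply/orP; right; rewrite inE; apply/existsP; exists x.
rewrite IH //; last by lia.
by rewrite /G_ind exu !inE hi /= !lay_ds hxu eqxx andbT; lia.
Qed.

Lemma csym j x y : connect (adj_ge e s j) x y = connect (adj_ge e s j) y x.
Proof. exact: (adj_ge_sym Hsym). Qed.

Lemma TP_parts P : P \in TP -> exists2 j, j < k & P \in parts e s j.
Proof. by move/bigcupP => [[j hj] _ H]; exists j. Qed.

Lemma parts_mem P j y : P \in parts e s j -> y \in P ->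
  ds y = j /\ (forall z, (z \in P) = (ds z == j) && connect (adj_ge e s j) y z).
Proof.
rewrite /parts !inE => /andP [_ /imsetP [S /imsetP [x0 x0in ->] ->]].
rewrite !inE => /andP [cy /eqP dy]; split => // z; rewrite !inE andbC.
congr (_ && _); apply/idP/idP => h.
  by rewrite csym in cy; exact: connect_trans cy h.
exact: connect_trans cy h.
Qed.

Lemma part_in y j z0 : j <= ds y -> ds z0 == j -> connect (adj_ge e s j) y z0 ->
  [set z | (ds z == j) && connect (adj_ge e s j) y z] \in parts e s j.
Proof.
move=> jy dz cz; rewrite /parts !inE; apply/andP; split.
  by apply/set0Pn; exists z0; rewrite !inE dz cz.
apply/imsetP; exists [set z | connect (adj_ge e s j) y z].
  by apply/imsetP; exists y => //; rewrite inE.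
by apply/setP => z; rewrite !inE andbC.
Qed.

Lemma part_TP y : ds y < k ->
  [set z | (ds z == ds y) && connect (adj_ge e s (ds y)) y z] \in TP.
Proof.
move=> hy; apply/bigcupP; exists (Ordinal hy) => //=.
by apply: (@part_in y (ds y) y) => //; exact: connect0.
Qed.

Lemma PQ_sub q z : z \in PQ q -> ds z = ds q /\ connect (adj_ge e s (ds q)) q z.
Proof.
rewrite inE => /existsP [P /and3P [PT qP zP]].
have [j _ Pj] := TP_parts PT.
have [dq HP] := parts_mem Pj qP.
move: zP; rewrite HP dq => /andP [/eqP -> ->]; split => //.
Qed.

Lemma PQ_eq q : ds q < k ->
  PQ q = [set z | (ds z == ds q) && connect (adj_ge e s (ds q)) q z].
Proof.
move=> hq; apply/setP => z; apply/idP/idP.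
  by move/PQ_sub => [dz cz]; rewrite inE dz eqxx cz.
move=> zin; rewrite inE; apply/existsP; eexists; apply/and3P; split; first exact: (part_TP hq).
  by rewrite inE eqxx connect0.
exact: zin.
Qed.

Lemma PQ_ball q : ds q < k -> PQ q \subset ball e q l.
Proof.
move=> hq; apply/subsetP => z zin; rewrite -(dist_le Hcon).
have Pin : PQ q \in parts e s (ds q).
  rewrite PQ_eq //; apply: (@part_in q (ds q) q) => //; exact: connect0.
apply: (Htl Pin) => //; rewrite PQ_eq // inE eqxx connect0 //.
Qed.

Lemma Cset_conn y u : u \in Cset y -> connect (adj_ge e s (ds y)) y u.
Proof.
rewrite inE => /existsP [x /andP [/PQ_sub [dx cx] /LB_anc h]].
apply: connect_trans cx _; rewrite -dx; exact: (anc_connect Hcon h).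
Qed.

Lemma Cset_iff y u : ds y < k -> ds y <= ds u -> ds u < i ->
  (u \in Cset y) = connect (adj_ge e s (ds y)) y u.
Proof.
move=> hy hyu hu; apply/idP/idP; first exact: Cset_conn.
move=> cyu; have [a [da dau]] := anc_exists Hcon hyu.
rewrite inE; apply/existsP; exists a; apply/andP; split.
  rewrite PQ_eq // inE da eqxx /=; apply: connect_trans cyu _.
  rewrite csym -da; have h : dist a u + ds a = ds u by rewrite da.
  exact: (anc_connect Hcon h).
apply: anc_LB => //; by rewrite da.
Qed.

Lemma exists_max (P : pred V) (F : V -> nat) x0 : P x0 ->
  exists x, P x && [forall y, P y ==> (F y <= F x)].
Proof.
move=> Px0; have : 0 < #|P| by apply/card_gt0P; exists x0.
case/(eq_bigmax_cond F) => x xP hx; exists x; apply/andP; split; first exact: xP.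
apply/forallP => y; apply/implyP => Py; rewrite -hx.
exact: (@leq_bigmax_cond _ (fun z => z \in P) F y).
Qed.

Local Notation D := (maxdeg e).
Local Notation Yset := (Yset L k Gi TP).

Lemma Yset_card q : ds q < k -> #|Yset q| <= D ^ (l + 2).
Proof.
move=> hq; have hP : #|PQ q| < D ^ l.+1.
  apply: leq_ltn_trans (subset_leq_card (PQ_ball hq)) _; exact: card_ball.
rewrite /C.Yset; case: ifP => _.
  apply: leq_trans (ltnW hP) _; rewrite leq_pexp2l ?addn2 //; exact: ltnW.
apply: leq_trans (_ : #|nbr e (PQ q)| <= _).
  apply: subset_leq_card; apply/subsetP => y; rewrite !inE => /andP [_ /existsP [x /andP [xin /and3P [exy _ _]]]].
  by apply/existsP; exists x; rewrite xin.
apply: leq_trans (card_nbr _ _) _.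
by rewrite addn2 expnS leq_mul2l ltnW // orbT.
Qed.

Lemma Y_complete q v : ds q < k -> ds v = i -> connect (adj_ge e s (ds q)) q v ->
  exists y, y \in Yset q /\ dist y v + ds y = i.
Proof.
move=> hq hv cqv; rewrite /C.Yset lay_ds; case: ifP => hm.
  have hqv : ds q <= ds v by rewrite hv /ii; lia.
  have [a [da dav]] := anc_exists Hcon hqv.
  exists a; split; last by rewrite da dav hv.
  rewrite PQ_eq // inE da eqxx /=; apply: connect_trans cqv _.
  rewrite csym -da; have h : dist a v + ds a = ds v by rewrite da.
  exact: (anc_connect Hcon h).
have hqv : (ds q).+1 <= ds v by rewrite hv /ii; lia.
have [a [da dav]] := anc_exists Hcon hqv.
have hqa : ds q <= ds a by rewrite da.
have [p [dp dpa]] := anc_exists Hcon hqa.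
have hpv : dist p v + ds p = ds v.
  have h1 : dist p a + ds p = ds a by rewrite dp.
  have h2 : dist a v + ds a = ds v by rewrite da.
  exact: (anc_trans Hcon h1 h2).
exists a; split; last by rewrite da dav hv.
rewrite inE lay_ds da eqxx /=; apply/existsP; exists p; apply/andP; split.
  rewrite PQ_eq // inE dp eqxx /=; apply: connect_trans cqv _.
  rewrite csym -dp; exact: (anc_connect Hcon hpv).
have epa : e p a by rewrite -(dist1 Hirr Hcon); apply/eqP; lia.
rewrite /G_ind epa !inE dp da /ii; lia.
Qed.

Lemma tl_half m m' : 0 < m' -> 2 * m' <= m -> trunc_log 2 m' < trunc_log 2 m.
Proof.
move=> hm' hm; apply: trunc_log_max => //.
by rewrite expnS; apply: leq_trans hm; rewrite leq_mul2l /= trunc_logP.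
Qed.



Lemma filt_map2 (ys : seq V) (w : V) (o : V -> V -> nat) (P : (V * V) * nat -> bool) :
  [seq p.1.1 | p <- [seq (p, o p.1 p.2) | p <- [seq (y, w) | y <- ys]] & P p] =
  [seq y <- ys | P ((y, w), o y w)].
Proof. by elim: ys => [|y ys IH] //=; case: (P _) => /=; rewrite IH. Qed.

Definition Tg v := [set u | (ds u == i.-1) && connect (adj_ge e s k.-1) v u].

Lemma Tg_ne v : ds v = i -> exists u, u \in Tg v.
Proof.
move=> hv; have h : i.-1 <= ds v by rewrite hv leq_pred.
have [a [da dav]] := anc_exists Hcon h.
exists a; rewrite inE da eqxx /= csym.
apply: (@adj_ge_mono _ _ _ _ (ds a)); first by rewrite da /ii; lia.
have h2 : dist a v + ds a = ds v by rewrite da.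
exact: (anc_connect Hcon h2).
Qed.

Lemma search_ok v f (Cand : {set V}) : ds v = i -> (forall u, u \in Cand -> ds u = i.-1) ->
  Tg v \subset Cand -> trunc_log 2 #|Cand| < f ->
  (run dist (search L l k Gi TP v f Cand)).1 = Tg v /\
  (run dist (search L l k Gi TP v f Cand)).2 <= D ^ (l + 2) * (trunc_log 2 #|Cand|).+1.
Proof.
move=> hv; elim: f Cand => [|f IH] Cand hC hT hf //.
have m1 : 0 < #|Cand|.
  have [u uT] := Tg_ne hv; apply/card_gt0P; exists u; exact: (subsetP hT).
have CsetC : forall y u, ds y < k -> u \in Cand -> (u \in Cset y) = connect (adj_ge e s (ds y)) y u.
  move=> y u hy uC; rewrite Cset_iff //; rewrite (hC u uC) /ii; lia.
rewrite /=; case: pickP => [q hq | hnone].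
  move: hq => /andP [/andP [hlq hmq] hmax]; rewrite lay_ds in hlq.
  rewrite run_bind run_askList /= filt_map2 /=.
  have hYc := Yset_card hlq.
  rewrite size_map -cardE.
  case E : [seq y <- enum (Yset q) | dist y v + lay y == i] => [|y ys].
    have disj : Tg v \subset Cand :\: Cset q.
      apply/subsetP => u uT; rewrite inE (subsetP hT) // andbT; apply/negP => uq.
      have cqu := Cset_conn uq.
      move: uT; rewrite inE => /andP [_ cvu].
      have cqv : connect (adj_ge e s (ds q)) q v.
        apply: connect_trans cqu _; rewrite csym.
        apply: (@adj_ge_mono _ _ _ _ k.-1) => //; lia.
      have [y [yY hyv]] := Y_complete hlq hv cqv.
      have : y \in [seq y <- enum (Yset q) | dist y v + lay y == i].
        by rewrite mem_filter mem_enum yY lay_ds hyv eqxx.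
      by rewrite E.
    have hm' : 2 * #|Cand :\: Cset q| < #|Cand| by rewrite cardsD; lia.
    have m1' : 0 < #|Cand :\: Cset q|.
      have [u uT] := Tg_ne hv; apply/card_gt0P; exists u; exact: (subsetP disj).
    have htl := tl_half m1' (ltnW hm').
    have hC' : forall u, u \in Cand :\: Cset q -> ds u = i.-1.
      by move=> u; rewrite inE => /andP [_ /hC].
    have [IH1 IH2] := IH _ hC' disj (leq_trans htl (hf : _ <= f)).
    split => //; rewrite mulnS; apply: leq_add => //; apply: leq_trans IH2 _.
    by rewrite leq_mul2l htl orbT.
  have : y \in [seq y <- enum (Yset q) | dist y v + lay y == i] by rewrite E mem_head.
  rewrite mem_filter mem_enum lay_ds => /andP [/eqP hyv yY].
  have hy : ((ds q).+1 == k) && (ds y == ds q) || ((ds q).+1 != k) && (ds y == (ds q).+1).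
    move: yY; rewrite /C.Yset lay_ds; case: ifP => hm /=.
      by move/PQ_sub => [-> _]; rewrite eqxx.
    by rewrite inE lay_ds => /andP [-> _].
  have hyk : ds y < k by case/orP: hy => /andP [/eqP hh /eqP ->]; lia.
  have hyv' : dist y v + ds y = ds v by rewrite hv.
  have cyv := anc_connect Hcon hyv'.
  have sub' : Tg v \subset Cand :&: Cset y.
    apply/subsetP => u uT; rewrite inE (subsetP hT) //= CsetC //; last exact: (subsetP hT).
    move: uT; rewrite inE => /andP [_ cvu]; apply: connect_trans cyv _.
    apply: (@adj_ge_mono _ _ _ _ k.-1) => //; lia.
  case: ifP; rewrite ?lay_ds => hdone.
    rewrite /= addn0; split; last by apply: leq_trans hYc _; rewrite leq_pmulr.
    apply/eqP; rewrite eqEsubset sub' andbT; apply/subsetP => u; rewrite inE => /andP [uC uy].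
    rewrite inE hC // eqxx /=; have := Cset_conn uy.
    have -> : ds y = k.-1 by lia.
    apply: connect_trans; rewrite csym; move: cyv; have -> : ds y = k.-1 by lia.
    done.
  have hy2 : ds y = (ds q).+1.
    by case/orP: hy => /andP [/eqP hh /eqP hh2]; lia.
  have hne : ~~ elig L k Gi TP Cand y.
    apply/negP => ey; move/forallP: hmax => /(_ y) /implyP /(_ ey).
    rewrite !lay_ds hy2; lia.
  move: hne; rewrite /elig lay_ds hyk /= -leqNgt => hm'.
  have m1' : 0 < #|Cand :&: Cset y|.
    have [u uT] := Tg_ne hv; apply/card_gt0P; exists u; exact: (subsetP sub').
  have htl := tl_half m1' hm'.
  have hC' : forall u, u \in Cand :&: Cset y -> ds u = i.-1.
    by move=> u; rewrite inE => /andP [/hC].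
  have [IH1 IH2] := IH _ hC' sub' (leq_trans htl (hf : _ <= f)).
  split => //; rewrite mulnS; apply: leq_add => //; apply: leq_trans IH2 _.
  by rewrite leq_mul2l htl orbT.
have k0 : k = 0.
  case: (posnP k) => // kpos; exfalso.
  have es : elig L k Gi TP Cand s.
    rewrite /elig lay_ds (dist_uu Hcon) kpos /=.
    have -> : Cand :&: Cset s = Cand.
      apply/setP => u; rewrite inE; case uC: (u \in Cand) => //=.
      rewrite CsetC ?(dist_uu Hcon) //; exact: adj_ge0.
    lia.
  have [x hx] := exists_max lay es.
  by have := hnone x; rewrite /best hx.
split => //; apply/eqP; rewrite eqEsubset hT andbT; apply/subsetP => u uC.
by rewrite inE hC // eqxx /= k0; exact: adj_ge0.
Qed.


Lemma Tg_card v : ds v = i -> #|Tg v| < D ^ (2 * l + 3).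
Proof.
move=> hv.
have hx : k.-1 <= ds v by rewrite hv /ii; lia.
have [x0 [dx0 hx0]] := anc_exists Hcon hx.
have cvx0 : connect (adj_ge e s k.-1) v x0.
  have h : dist x0 v + ds x0 = ds v by rewrite dx0.
  by rewrite csym -dx0; exact: (anc_connect Hcon h).
have Pin := @part_in v k.-1 x0 hx (introT eqP dx0) cvx0.
apply: leq_ltn_trans (_ : #|ball e x0 (2 * l + 2)| < _); last by rewrite (_ : 2 * l + 3 = (2 * l + 2).+1); [exact: card_ball | lia].
apply: subset_leq_card; apply/subsetP => u; rewrite inE => /andP [/eqP du cvu].
have hu : k.-1 <= ds u by rewrite du /ii; lia.
have [a [da hau]] := anc_exists Hcon hu.
have cva : connect (adj_ge e s k.-1) v a.
  have h : dist a u + ds a = ds u by rewrite da.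
  apply: connect_trans cvu _; rewrite csym -da; exact: (anc_connect Hcon h).
have dxa : dist x0 a <= l.
  apply: (Htl Pin); rewrite inE ?dx0 ?da eqxx //=.
move: hau; rewrite du /ii => hau.
rewrite -(dist_le Hcon); apply: leq_trans (dist_tri Hcon x0 a u) _; lia.
Qed.

Definition Wv v := [set w in L i | Tg w == Tg v].

Lemma Wv_card v : ds v = i -> #|Wv v| <= D ^ (2 * l + 4).
Proof.
move=> hv; apply: leq_trans (_ : #|nbr e (Tg v)| <= _).
  apply: subset_leq_card; apply/subsetP => w; rewrite !inE => /andP [/eqP dw /eqP Tw].
  have h : i.-1 <= ds w by rewrite dw leq_pred.
  have [p [dp hpw]] := anc_exists Hcon h.
  apply/existsP; exists p; apply/andP; split.
    rewrite -Tw inE dp eqxx /= csym.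
    apply: (@adj_ge_mono _ _ _ _ (ds p)); first by rewrite dp /ii; lia.
    have h2 : dist p w + ds p = ds w by rewrite dp.
    exact: (anc_connect Hcon h2).
  rewrite -(dist1 Hirr Hcon); apply/eqP; move: hpw; rewrite dw /ii; lia.
apply: leq_trans (card_nbr _ _) _.
rewrite (_ : 2 * l + 4 = (2 * l + 3).+1) ?expnS; last lia.
by rewrite leq_mul2l ltnW ?orbT // Tg_card.
Qed.



Lemma sumn_le (s0 : seq V) (F : V -> nat) B : (forall x, x \in s0 -> F x <= B) ->
  sumn [seq F x | x <- s0] <= size s0 * B.
Proof.
elim: s0 => [|x s0 IH] //= H; rewrite mulSn; apply: leq_add; first by apply: H; rewrite mem_head.
by apply: IH => y yin; apply: H; rewrite in_cons yin orbT.
Qed.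

Lemma memE1 (T : eqType) (ps : seq T) (g : T -> nat) z :
  (z \in [seq p.1 | p <- [seq (p, g p) | p <- ps] & p.2 == 1]) = (z \in ps) && (g z == 1).
Proof.
elim: ps => [|p ps IH] //=; case: ifP => /= h; rewrite !in_cons IH.
  by case: (eqVneq z p) => [->|] //=; rewrite h.
by case: (eqVneq z p) => [->|] //=; rewrite h !andbF.
Qed.

Lemma tl_le m : trunc_log 2 m <= m.
Proof.
case: (posnP m) => [->|mp]; first by rewrite trunc_log0.
apply: leq_trans (trunc_logP (isT : 1 < 2) mp); apply: ltnW; exact: ltn_expl.
Qed.

Arguments search : simpl never.

Lemma alg_ok : let r := run dist (alg L l k Gi TP) in
  r.1 =2 G_ind e s i.+1 /\
  r.2 <= #|L i| * (D ^ (l + 2) * (trunc_log 2 #|V|).+1 + 2 * D ^ (4 * l + 8)).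
Proof.
rewrite /alg run_bind run_mapQ /= run_bind run_askList /=.
set Vi := enum (L i).
have srch : forall v, v \in Vi ->
    (run dist (search L l k Gi TP v #|V|.+1 (L i.-1))).1 = Tg v /\
    (run dist (search L l k Gi TP v #|V|.+1 (L i.-1))).2 <= D ^ (l + 2) * (trunc_log 2 #|V|).+1.
  move=> v; rewrite mem_enum inE => /eqP hv.
  have hC : forall u, u \in L i.-1 -> ds u = i.-1 by move=> u; rewrite inE => /eqP.
  have hT : Tg v \subset L i.-1 by apply/subsetP => u; rewrite !inE => /andP [].
  have hf : trunc_log 2 #|L i.-1| < #|V|.+1.
    by rewrite ltnS; apply: leq_trans (tl_le _) (max_card _).
  have [h1 h2] := search_ok hv hC hT hf; split => //.
  apply: leq_trans h2 _; rewrite leq_mul2l ltnS leq_trunc_log ?orbT //; exact: max_card.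
set cs := [seq _ | v <- Vi].
have cfE : forall v, v \in Vi -> cfOf Vi cs v = Tg v.
  move=> v vin; rewrite /cfOf (nth_map v) ?index_mem // nth_index //.
  by have [] := srch v vin.
have WE : forall v, v \in Vi -> [set w in L i | cfOf Vi cs w == cfOf Vi cs v] = Wv v.
  move=> v vin; apply/setP => w; rewrite !inE; case wi: (ds w == i) => //=.
  by rewrite !cfE // mem_enum inE.
have pairsP : forall x y, ((x, y) \in pairsOf L l k Vi (cfOf Vi cs)) =
    (y \in L i) && (x \in Tg y :|: Wv y).
  move=> x y; apply/flatten_mapP/andP => [[vv vin /mapP [uu uin [ex ey]]]|[yin xin]].
    subst x y; move: uin; rewrite mem_enum WE // cfE // => ->.
    by rewrite -(mem_enum (L i)).
  have yV : y \in Vi by rewrite mem_enum.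
  exists y => //; apply/mapP; exists x => //.
  by rewrite mem_enum WE // cfE.
split.
  move=> x y; rewrite !(memE1 _ (fun p => dist p.1 p.2)) /= !pairsP !(dist1 Hirr Hcon).
  have inP : forall x y, ds y = i -> e x y -> ds x <= i -> x \in Tg y :|: Wv y.
    move=> x' y' hy exy hx; have := ds_edge Hcon s exy; rewrite hy => hx2.
    have cyx : connect (adj_ge e s k.-1) y' x'.
      apply: connect1; rewrite /adj_ge Hsym exy !inE hy; apply/and3P; split => //; move: hx2; rewrite /ii; lia.
    case: (eqVneq (ds x') i) => hxi.
      rewrite inE; apply/orP; right; rewrite !inE hxi eqxx /=; apply/eqP/setP => u.
      rewrite !inE; congr (_ && _); apply/idP/idP => h.
        by apply: connect_trans cyx h.
      have cxy : connect (adj_ge e s k.-1) x' y' by rewrite csym.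
      exact: connect_trans cxy h.
    rewrite inE; apply/orP; left; rewrite inE cyx andbT; apply/eqP; lia.
  have outP : forall x y, x \in Tg y :|: Wv y -> ds x <= i.
    by move=> x' y'; rewrite !inE => /orP [/andP [/eqP -> _]|/andP [/eqP -> _]] //; exact: leq_pred.
  apply/idP/idP.
    case/orP => [/orP [|]|].
        by case/and3P => exy hx hy; rewrite /G_ind exy !inE; rewrite !inE in hx hy; rewrite ltnS ltnW // ltnW.
      case/andP => /andP [yi xin] exy; move: yi; rewrite inE => /eqP hyi.
      by rewrite /G_ind exy !inE !ltnS (outP _ _ xin) hyi leqnn.
    case/andP => /andP [xi yin] eyx; move: xi; rewrite inE => /eqP hxi.
    by rewrite /G_ind Hsym eyx !inE !ltnS (outP _ _ yin) hxi leqnn.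
  case/and3P => exy hx hy; rewrite !inE !ltnS in hx hy.
  case: (eqVneq (ds y) i) => hyi.
    by apply/orP; left; apply/orP; right; rewrite inE hyi eqxx exy inP.
  case: (eqVneq (ds x) i) => hxi.
    by apply/orP; right; rewrite inE hxi eqxx Hsym exy inP // Hsym.
  apply/orP; left; apply/orP; left; rewrite /G_ind exy !inE; apply/andP; split; lia.
rewrite addn0 mulnDr; apply: leq_add.
  rewrite [#|L i|]cardE; apply: sumn_le => v vin; by have [] := srch v vin.
rewrite /pairsOf size_flatten /shape -map_comp.

rewrite [#|L i|]cardE; apply: sumn_le => v vin.
rewrite size_map -cardE (WE v vin) (cfE v vin).
have hv : ds v = i by move: vin; rewrite mem_enum inE => /eqP.
apply: leq_trans (leq_card_setU _ _).1 _.
have h1 := Tg_card hv; have h2 := Wv_card hv.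
have h3 : D ^ (2 * l + 3) <= D ^ (4 * l + 8).
  rewrite leq_pexp2l ?(ltnW D2) //; apply/leP; lia.
have h4 : D ^ (2 * l + 4) <= D ^ (4 * l + 8).
  rewrite leq_pexp2l ?(ltnW D2) //; apply/leP; lia.
rewrite mul2n -addnn; apply: leq_add; [exact: leq_trans (ltnW h1) h3 | exact: leq_trans h2 h4].
Qed.

End Proofs.

End D.
Import D.

Unset Implicit Arguments.

Lemma INR_expn2 t : INR (expn 2 t) = Rpow_def.pow (INR 2) t.
Proof.
elim: t => [|t IH] //; rewrite expnS mult_INR IH /=; by [].
Qed.

Lemma ln_le_mono (x y : R) : Rlt 0 x -> Rle x y -> Rle (ln x) (ln y).
Proof.
move=> x0 [h|->]; last by apply: Rle_refl.
by apply: Rlt_le; apply: ln_increasing.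
Qed.

Lemma tl_ln n : 2 <= n -> Rle (INR (trunc_log 2 n).+1) (Rmult 4 (ln (INR n))).
Proof.
move=> n2.
have np : 0 < n by apply: leq_trans n2.
set t := trunc_log 2 n.
have h1 : Rle (INR (expn 2 t)) (INR n) by apply: le_INR; apply/leP; exact: trunc_logP.
have h2 : Rle (Rmult (INR t) (ln 2)) (ln (INR n)).
  have -> : ln 2 = ln (INR 2) by rewrite INR_IZR_INZ.
  rewrite -ln_pow; last by rewrite INR_IZR_INZ /=; lra.
  rewrite -INR_expn2; apply: ln_le_mono => //.
  apply: lt_0_INR; apply/ltP; by rewrite expn_gt0.
have h3 : Rle (ln 2) (ln (INR n)).
  have -> : ln 2 = ln (INR 2) by rewrite INR_IZR_INZ.
  apply: ln_le_mono; first by rewrite INR_IZR_INZ /=; lra.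
  by apply: (le_INR 2 n); apply/leP.
have h4 := ln_lt_2.
have h5 := pos_INR t.
rewrite S_INR.
nra.
Qed.

Definition Proc : Procedure := fun n inp =>
  alg (in_layers inp) (in_ell inp) (in_k inp) (in_Gi inp) (in_Tparts inp).

Theorem mainTheorem6 :
  exists (C : R) (A : Procedure),
  forall (n : nat) (e : rel 'I_n) (s : 'I_n) (l k : nat),
    simple_graph e -> connected_graph e -> 2 <= n -> 2 <= maxdeg e ->
    tree_length_le e s l ->
    let i := k + l + 2 in
    let inp := mkInput l k (layer e s) (G_ind e s i)
                 (Tk_parts e s k) (Tk_edge e s k) in
    let r := run (gdist e) (A n inp) in
    r.1 =2 G_ind e s i.+1 /\
    Rle (INR r.2) (query_bound C n #|layer e s i| (maxdeg e) l).
Proof.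
exists (Rplus 2 2), Proc => n e s l k [Hsym Hirr] Hcon n2 D2 Htl i inp r.
have [h1 h2] := alg_ok Hsym Hirr Hcon k Htl D2.
split; first exact: h1.
move: h2; rewrite card_ord -/(ii l k) => h2.
rewrite /query_bound.
set Li := #|layer e s (ii l k)| in h2 *.
set a := maxdeg e ^ (l + 2) in h2 *.
set b := maxdeg e ^ (4 * l + 8) in h2 *.
set t := (trunc_log 2 n).+1 in h2.
have hr : Rle (INR r.2) (INR (Li * (a * t + 2 * b))) by apply: le_INR; apply/leP; exact: h2.
apply: Rle_trans hr _.
rewrite !mult_INR plus_INR !mult_INR.
have ht := tl_ln n n2.
have hL := pos_INR Li; have ha := pos_INR a; have hb := pos_INR b.
have h2R : INR 2 = Rplus 1 1 by [].
rewrite h2R.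
have hat : Rle (Rmult (INR a) (INR t)) (Rmult (INR a) (Rmult 4 (ln (INR n)))).
  by apply: Rmult_le_compat_l.
have hin : Rle (Rplus (Rmult (INR a) (INR t)) (Rmult (Rplus 1 1) (INR b)))
               (Rmult 4 (Rplus (Rmult (INR a) (ln (INR n))) (INR b))) by lra.
have := Rmult_le_compat_l _ _ _ hL hin; lra.
Qed.
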